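(* There is an absolute constant $C_5$ such that the following holds for all $p\in(0,0.1)$. Let $R_1,\dots,R_{n+1}$ be a good sequence of rectangles with $\dim(R_1)=(a_1,b_1)$, let $a_0=b_0:=A$, $s_0:=a_1-a_0$, $t_0:=b_1-b_0$. Then $$\mathbb{P}_p\big[G(R_1)\big]\le \exp\big[-s_0\,g(b_0q)-t_0\,g(a_0q)+C_5q^{-1/2}\log q^{-1}\big].$$
   Context: $q=-\log(1-p)$, $A=\lceil 1/\sqrt q\rceil$, $B=\lfloor q^{-1}\log q^{-1}\rfloor$; $\beta(u)=\frac{u+\sqrt{u(4-3u)}}{2}$, $g(z)=-\log\beta(1-e^{-z})$. Under $\mathbb{P}_p$ the initial configuration assigns independent states to sites of $\mathbb{Z}^2$: the origin is active with probability $p$, else empty; every other site is occupied with probability $p$, else empty. A rectangle is $\{a,\dots,c\}\times\{b,\dots,d\}\subset\mathbb{Z}^2$ with dimensions $(c-a+1,d-b+1)$; columns are $\{x\}\times\{b,\dots,d\}$, rows $\{a,\dots,c\}\times\{y\}$. A double gap in the columns (rows) is a pair of consecutive columns (rows) consisting entirely of initially empty sites; $G(R)$ is the event that $R$ has no double gap in the columns or rows. A sequence of rectangles $R_1,\dots,R_{n+1}$ ($n\ge1$) with $\dim(R_i)=(a_i,b_i)$, $s_i=a_{i+1}-a_i$, $t_i=b_{i+1}-b_i$ is good if: (i) $0\in R_1\subseteq\dots\subseteq R_{n+1}$; (ii) $\min(a_1,b_1)\in[A,A+3]$; (iii) $a_n+b_n\le B$; (iv) $a_{n+1}+b_{n+1}>B$;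 (v) for $i=1,\dots,n$, $s_i\ge a_i\sqrt q$ or $t_i\ge b_i\sqrt q$; (vi) for $i=1,\dots,n$, $s_i<a_i\sqrt q+4$ and $t_i<b_i\sqrt q+4$. *)

(* Defs.v *)
From HB Require Import structures.
From mathcomp Require Import all_boot all_order all_algebra.
From mathcomp Require Import all_classical all_reals all_analysis.
Set Implicit Arguments. Unset Strict Implicit. Unset Printing Implicit Defensive.
Import Order.TTheory GRing.Theory Num.Theory.
Local Open Scope ring_scope.

Section Defs.
Variable R : realType.

Definition qp (p : R) : R := - ln (1 - p).
Definition Aint (p : R) : int := Num.ceil (1 / Num.sqrt (qp p)).
Definition Bint (p : R) : int := Num.floor ((qp p)^-1 * ln ((qp p)^-1)).

Definition beta (u : R) : R := (u + Num.sqrt (u * (4 - 3 * u))) / 2.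
Definition gfun (z : R) : R := - ln (beta (1 - expR (- z))).

Record rect := Rect { rx0 : int; ry0 : int; rx1 : int; ry1 : int }.
Definition in_rect (r : rect) (x y : int) : Prop :=
  (rx0 r <= x <= rx1 r) /\ (ry0 r <= y <= ry1 r).
Definition subrect (r1 r2 : rect) : Prop :=
  forall x y, in_rect r1 x y -> in_rect r2 x y.
Definition dima (r : rect) : int := rx1 r - rx0 r + 1.
Definition dimb (r : rect) : int := ry1 r - ry0 r + 1.

(* good sequence R_1, ..., R_{n+1} (indices 1..n+1 of Rs) *)
Definition good (p : R) (n : nat) (Rs : nat -> rect) : Prop :=
  let sq := Num.sqrt (qp p) in
  let a i := dima (Rs i) in
  let b i := dimb (Rs i) in
  (1 <= n)%N /\
  in_rect (Rs 1%N) 0 0 /\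
  (forall i, (1 <= i <= n)%N -> subrect (Rs i) (Rs i.+1)) /\
  (Aint p <= Num.min (a 1%N) (b 1%N) <= Aint p + 3) /\
  (a n + b n <= Bint p) /\
  (a n.+1 + b n.+1 > Bint p) /\
  (forall i, (1 <= i <= n)%N ->
     ((a i)%:~R * sq <= (a i.+1 - a i)%:~R) \/ ((b i)%:~R * sq <= (b i.+1 - b i)%:~R)) /\
  (forall i, (1 <= i <= n)%N ->
     ((a i.+1 - a i)%:~R < (a i)%:~R * sq + 4) /\ ((b i.+1 - b i)%:~R < (b i)%:~R * sq + 4)).

(* Configurations of the w x h sites of a rectangle (site (i,j) is the site
   (x0+i, y0+j)); true = initially non-empty (occupied, or active for the
   origin), which has probability p independently at every site. *)
Definition config (w h : nat) := {ffun 'I_w * 'I_h -> bool}.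

Definition col_empty w h (om : config w h) (x : nat) : bool :=
  [forall k : 'I_w * 'I_h, (k.1 == x :> nat) ==> ~~ om k].
Definition row_empty w h (om : config w h) (y : nat) : bool :=
  [forall k : 'I_w * 'I_h, (k.2 == y :> nat) ==> ~~ om k].

Definition double_gap_cols w h (om : config w h) : bool :=
  [exists i : 'I_w, (i.+1 < w)%N && col_empty om i && col_empty om i.+1].
Definition double_gap_rows w h (om : config w h) : bool :=
  [exists j : 'I_h, (j.+1 < h)%N && row_empty om j && row_empty om j.+1].

Definition Gev w h (om : config w h) : bool :=
  ~~ double_gap_cols om && ~~ double_gap_rows om.

Definition probG (p : R) (w h : nat) : R :=
  \sum_(om : config w h | Gev om) \prod_(k : 'I_w * 'I_h) (if om k then p else 1 - p).

Definition probG_rect (p : R) (r : rect) : R :=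
  probG p `|dima r|%N `|dimb r|%N.

End Defs.

(* Main.v *)
Require Import Defs.
From HB Require Import structures.
From mathcomp Require Import all_boot all_order all_algebra.
From mathcomp Require Import all_classical all_reals all_analysis.
From mathcomp Require Import ring lra zify.
Import Order.TTheory GRing.Theory Num.Theory.
Local Open Scope ring_scope.

Section Comb.
Variable R : realType.

Definition pw (p : R) (b : bool) : R := if b then p else 1 - p.

Definition trc {w h} (om : config w h) : config h w := [ffun k => om (k.2, k.1)].

Lemma trcK w h (om : config w h) : trc (trc om) = om.
Proof. by apply/ffunP => -[i j]; rewrite !ffunE. Qed.

Lemma col_empty_tr w h (om : config w h) x : col_empty (trc om) x = row_empty om x.
Proof.
rewrite /col_empty /row_empty; apply/forallP/forallP => H [i j] /=.
- by have := H (j, i); rewrite ffunE.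
- by have := H (j, i); rewrite ffunE.
Qed.

Lemma row_empty_tr w h (om : config w h) x : row_empty (trc om) x = col_empty om x.
Proof.
rewrite /col_empty /row_empty; apply/forallP/forallP => H [i j] /=.
- by have := H (j, i); rewrite ffunE.
- by have := H (j, i); rewrite ffunE.
Qed.

Lemma Gev_tr w h (om : config w h) : Gev (trc om) = Gev om.
Proof.
rewrite /Gev /double_gap_cols /double_gap_rows andbC.
congr (~~ _ && ~~ _); apply: eq_existsb => i;
  by rewrite ?col_empty_tr ?row_empty_tr.
Qed.

Lemma probG_sym (p : R) w h : probG p w h = probG p h w.
Proof.
rewrite /probG (reindex (@trc h w)) /=; last first.
  by exists (@trc w h) => om _; rewrite trcK.
apply: eq_big => om; first by rewrite Gev_tr.
move=> _.
rewrite (reindex (fun k : 'I_w * 'I_h => (k.2, k.1))) /=; last first.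
  by exists (fun k : 'I_h * 'I_w => (k.2, k.1)) => -[].
by apply: eq_bigr => -[i j] _; rewrite ffunE.
Qed.

Definition zv {w h} (f : {ffun 'I_h -> {ffun 'I_w -> bool}}) : {ffun 'I_h -> bool} :=
  [ffun j => [forall i, ~~ f j i]].
Definition unc {w h} (f : {ffun 'I_h -> {ffun 'I_w -> bool}}) : config w h :=
  [ffun k => f k.2 k.1].
Definition cur {w h} (om : config w h) : {ffun 'I_h -> {ffun 'I_w -> bool}} :=
  [ffun j => [ffun i => om (i, j)]].
Definition at_ {h} (s : {ffun 'I_h -> bool}) (y : nat) :=
  [exists j : 'I_h, (j == y :> nat) && s j].
Definition dbl {h} (s : {ffun 'I_h -> bool}) := [exists j : 'I_h, s j && at_ s j.+1].

Lemma at_ord h (s : {ffun 'I_h -> bool}) (j : 'I_h) : at_ s j = s j.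
Proof.
apply/existsP/idP => [[j' /andP[/eqP e sj']]|sj]; last by exists j; rewrite eqxx.
by have -> : j = j' by apply/val_inj.
Qed.

Lemma row_empty_unc w h (f : {ffun 'I_h -> {ffun 'I_w -> bool}}) y :
  (y < h)%N -> row_empty (unc f) y = at_ (zv f) y.
Proof.
move=> hy; pose j0 := Ordinal hy.
have -> : at_ (zv f) y = zv f j0 by rewrite -at_ord.
rewrite ffunE /row_empty; apply/forallP/forallP => H.
- by move=> i; have := H (i, j0); rewrite ffunE /= eqxx.
- move=> [i j] /=; rewrite ffunE /=; apply/implyP => /eqP e.
  have -> : j = j0 by apply/val_inj.
  exact: H.
Qed.

Lemma dgr_unc w h (f : {ffun 'I_h -> {ffun 'I_w -> bool}}) :
  double_gap_rows (unc f) = dbl (zv f).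
Proof.
rewrite /double_gap_rows /dbl; apply/existsP/existsP.
- move=> [j /andP[/andP[hj r1] r2]]; exists j.
  rewrite (@row_empty_unc w h f j (ltn_ord j)) at_ord in r1.
  by rewrite r1 -row_empty_unc.
- move=> [j /andP[s1 /existsP[j' /andP[/eqP e sj']]]]; exists j.
  have hj : (j.+1 < h)%N by rewrite -e ltn_ord.
  rewrite hj /= (@row_empty_unc w h f j (ltn_ord j)) at_ord s1 /= row_empty_unc //.
  by apply/existsP; exists j'; rewrite e eqxx.
Qed.

Lemma uncK w h : cancel (@unc w h) cur.
Proof. by move=> f; apply/ffunP => j; apply/ffunP => i; rewrite !ffunE. Qed.
Lemma curK w h : cancel (@cur w h) unc.
Proof. by move=> om; apply/ffunP => -[i j]; rewrite !ffunE. Qed.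

Lemma wt_unc (p : R) w h (f : {ffun 'I_h -> {ffun 'I_w -> bool}}) :
  \prod_(k : 'I_w * 'I_h) pw p (unc f k) = \prod_j \prod_i pw p (f j i).
Proof.
rewrite exchange_big pair_big /=.
by apply: eq_bigr => -[i j] _; rewrite ffunE.
Qed.

Lemma forall_prod (I : finType) (P : pred I) :
  ([forall i, P i]%:R : R) = \prod_i (P i)%:R.
Proof.
case: (boolP [forall i, P i]) => [/forallP H|/forallP H].
  by rewrite big1 // => i _; rewrite H.
have [i Hi] : exists i, ~~ P i.
  by apply/existsP; rewrite -negb_forall; apply/forallP.
by rewrite (bigD1 i) //= (negbTE Hi) mul0r.
Qed.

Lemma sum_all (p : R) w : \sum_(r : {ffun 'I_w -> bool}) \prod_i pw p (r i) = 1.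
Proof.
rewrite -(bigA_distr_bigA (fun (_ : 'I_w) b => pw p b)) /=.
by rewrite big1 // => i _; rewrite big_bool /= /pw addrC subrK.
Qed.

Lemma sum_empty (p : R) w :
  \sum_(r : {ffun 'I_w -> bool}) [forall i, ~~ r i]%:R * \prod_i pw p (r i) = (1 - p) ^+ w.
Proof.
under eq_bigr => r _ do rewrite forall_prod -big_split /=.
rewrite -(bigA_distr_bigA (fun (_ : 'I_w) b => (~~ b)%:R * pw p b)) /=.
by rewrite prodr_const card_ord; congr (_ ^+ _); rewrite big_bool /= mul0r add0r mul1r.
Qed.

Definition Dx (x : R) h := \sum_(s : {ffun 'I_h -> bool} | ~~ dbl s) \prod_j pw x (s j).

Lemma row_sum (p : R) w (b : bool) :
  \sum_(r : {ffun 'I_w -> bool}) ([forall i, ~~ r i] == b)%:R * \prod_i pw p (r i)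
  = pw ((1 - p) ^+ w) b.
Proof.
case: b => /=.
  by under eq_bigr => r _ do rewrite eqb_id; rewrite sum_empty.
have -> : (1 - (1 - p) ^+ w) = \sum_(r : {ffun 'I_w -> bool}) \prod_i pw p (r i)
   - \sum_(r : {ffun 'I_w -> bool}) [forall i, ~~ r i]%:R * \prod_i pw p (r i).
  by rewrite sum_all sum_empty.
rewrite -sumrB; apply: eq_bigr => r _.
by case: [forall i, ~~ r i] => /=; rewrite ?mul1r ?mul0r ?subrr ?subr0 ?mul1r.
Qed.

Lemma probG_le_Dx (p : R) w h : 0 <= p <= 1 -> probG p w h <= Dx ((1 - p) ^+ w) h.
Proof.
move=> /andP[p0 p1].
have wt0 : forall b, 0 <= pw p b by case; rewrite /pw ?subr_ge0.
apply: (@le_trans _ _ (\sum_(om : config w h | ~~ double_gap_rows om)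
    \prod_(k : 'I_w * 'I_h) pw p (om k))).
  rewrite /probG [X in X <= _]big_mkcond [X in _ <= X]big_mkcond /=.
  apply: ler_sum => om _; rewrite /Gev.
  case: (double_gap_rows om); case: (double_gap_cols om) => //=; exact: prodr_ge0.
rewrite (reindex (@unc w h)) /=; last by exists cur => om _; rewrite ?uncK ?curK.
under eq_bigl => f do rewrite dgr_unc.
under eq_bigr => f _ do rewrite wt_unc.
rewrite (partition_big zv (fun s => ~~ dbl s)) //=.
rewrite /Dx le_eqVlt; apply/orP; left; apply/eqP; apply: eq_bigr => s ns.
rewrite big_mkcond /=.
transitivity (\sum_(f : {ffun 'I_h -> {ffun 'I_w -> bool}})
   \prod_j (([forall i, ~~ f j i] == s j)%:R * \prod_i pw p (f j i))).
  apply: eq_bigr => f _; rewrite big_split /=.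
  have -> : \prod_j (([forall i, ~~ f j i] == s j)%:R : R) = (zv f == s)%:R.
    case: (eqVneq (zv f) s) => [<-|ne].
      by rewrite big1 // => j _; rewrite ffunE eqxx.
    have [j hj] : exists j, zv f j != s j.
      apply/existsP; rewrite -negb_forall; apply/negP => /forallP H.
      by move/eqP: ne; apply; apply/ffunP => j; apply/eqP.
    by rewrite (bigD1 j) //= -(ffunE (fun j => [forall i, ~~ f j i])) -/(zv f j) (negbTE hj) mul0r.
  case: (eqVneq (zv f) s) => [->|_]; first by rewrite ns mul1r.
  by rewrite andbF mul0r.
rewrite -(bigA_distr_bigA (fun j (r : {ffun 'I_w -> bool}) =>
     ([forall i, ~~ r i] == s j)%:R * \prod_i pw p (r i))) /=.
by apply: eq_bigr => j _; rewrite row_sum.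
Qed.

Definition Dp (x : R) h (c : bool) :=
  \sum_(s : {ffun 'I_h -> bool} | ~~ dbl s && ~~ (c && at_ s 0)) \prod_j pw x (s j).

Definition cns {h} (b : bool) (t : {ffun 'I_h -> bool}) : {ffun 'I_h.+1 -> bool} :=
  [ffun i => if unlift ord0 i is Some j then t j else b].

Lemma cns0 h b (t : {ffun 'I_h -> bool}) : cns b t ord0 = b.
Proof. by rewrite ffunE unlift_none. Qed.
Lemma cnsS h b (t : {ffun 'I_h -> bool}) j : cns b t (lift ord0 j) = t j.
Proof. by rewrite ffunE liftK. Qed.

Lemma at_cns0 h b (t : {ffun 'I_h -> bool}) : at_ (cns b t) 0 = b.
Proof. by rewrite -[0%N]/(nat_of_ord (@ord0 h)) at_ord cns0. Qed.

Lemma at_cnsS h b (t : {ffun 'I_h -> bool}) y : at_ (cns b t) y.+1 = at_ t y.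
Proof.
apply/existsP/existsP => [[j /andP[/eqP e sj]]|[j /andP[/eqP e sj]]].
- case: (unliftP ord0 j) e sj => [j' ->|->] //.
  by rewrite lift0 cnsS => -[e] sj; exists j'; rewrite e eqxx.
- by exists (lift ord0 j); rewrite lift0 cnsS e eqxx.
Qed.

Lemma exists_ordS n (P : pred 'I_n.+1) :
  [exists j, P j] = P ord0 || [exists j : 'I_n, P (lift ord0 j)].
Proof.
apply/existsP/orP => [[j]|[H|/existsP[j H]]].
- by case: (unliftP ord0 j) => [j' ->|->] H; [right; apply/existsP; exists j'|left].
- by exists ord0.
- by exists (lift ord0 j).
Qed.

Lemma dbl_cns h b (t : {ffun 'I_h -> bool}) : dbl (cns b t) = (b && at_ t 0) || dbl t.
Proof.
rewrite /dbl exists_ordS cns0 -[1%N]/(0.+1) at_cnsS; congr (_ || _).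
by apply: eq_existsb => j; rewrite cnsS lift0 at_cnsS.
Qed.

Lemma sum_pair (T : finType) (G : bool * T -> R) :
  \sum_(bt : bool * T) G bt = \sum_t G (true, t) + \sum_t G (false, t).
Proof.
transitivity (\sum_(b : bool) \sum_(t : T) G (b, t)); last by rewrite big_bool.
by rewrite (pair_bigA _ (fun b t => G (b, t))) /=; apply: eq_bigr => -[].
Qed.

Lemma Dp_rec (x : R) h c :
  Dp x h.+1 c = (1 - x) * Dp x h false + (~~ c)%:R * x * Dp x h true.
Proof.
rewrite /Dp (reindex (fun bt : bool * {ffun 'I_h -> bool} => cns bt.1 bt.2)) /=;
  last first.
  exists (fun s : {ffun 'I_h.+1 -> bool} => (s ord0, [ffun j => s (lift ord0 j)])).
    move=> [b t] _ /=; rewrite cns0; congr (_, _); apply/ffunP => j.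
    by rewrite ffunE cnsS.
  move=> s _ /=; apply/ffunP => i; rewrite ffunE.
  by case: (unliftP ord0 i) => [j ->|->]; rewrite ?ffunE.
rewrite big_mkcond sum_pair /=.
rewrite !mulr_sumr addrC; congr (_ + _).
- rewrite [in RHS]big_mkcond /=; apply: eq_bigr => t _.
  rewrite dbl_cns at_cns0 big_ord_recl cns0 /= andbF /=.
  under [in LHS]eq_bigr => j _ do rewrite cnsS.
  by case: ifP => _; rewrite ?mulr0 // /pw.
- rewrite [in RHS]big_mkcond /=; apply: eq_bigr => t _.
  rewrite dbl_cns at_cns0 big_ord_recl cns0 /= andbT.
  under [in LHS]eq_bigr => j _ do rewrite cnsS.
  case: c; rewrite /= ?andbF /= ?mul0r ?mulr0 ?mul1r //.
  - by case: ifP.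
  - by rewrite andbT negb_or andbC.
Qed.

Lemma Dp0 (x : R) c : Dp x 0 c = 1.
Proof.
rewrite /Dp (eq_bigl (pred1 [ffun _ => false])); first by rewrite big_pred1_eq big_ord0.
move=> s /=.
have -> : s == [ffun _ => false] by apply/eqP/ffunP => -[].
have -> : dbl s = false by apply/existsP => -[[]].
have -> : at_ s 0 = false by apply/existsP => -[[]].
by rewrite andbF.
Qed.

Lemma Dx_Dp (x : R) h : Dx x h = Dp x h false.
Proof. by rewrite /Dx /Dp; apply: eq_bigl => s; rewrite /= andbT. Qed.

Lemma Dx_bound (x bt : R) h : 0 <= x <= 1 -> 0 <= bt <= 1 ->
  bt ^+ 2 = (1 - x) * bt + x * (1 - x) -> bt * Dx x h <= bt ^+ h.
Proof.
move=> /andP[x0 x1] /andP[b0 b1] hb.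
suff : bt * Dp x h false <= bt ^+ h /\ bt * Dp x h.+1 false <= bt ^+ h.+1.
  by rewrite Dx_Dp => -[].
elim: h => [|h [IH1 IH2]].
  rewrite Dp_rec !Dp0 /= expr0 expr1 mul1r; split; first by rewrite mulr1.
  by rewrite !mulr1 subrK mulr1.
split => //.
rewrite Dp_rec /= mul1r (Dp_rec x h true) /= !mul0r addr0.
have e : bt ^+ h.+2 = (1 - x) * bt ^+ h.+1 + x * (1 - x) * bt ^+ h.
  by rewrite !exprS mulrA -expr2 hb mulrDl -!mulrA.
have h1 := ler_wpM2l (_ : 0 <= 1 - x) IH2.
have h2 := ler_wpM2l (_ : 0 <= x * (1 - x)) IH1.
rewrite e.
have s1 : 0 <= 1 - x by rewrite subr_ge0.
have := h1 s1; have := h2 (mulr_ge0 x0 s1).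
move=> H1 H2; nra.
Qed.


Lemma beta_props (u : R) : 0 <= u <= 1 ->
  [/\ u <= beta u, beta u <= 1 & beta u ^+ 2 = (1 - (1 - u)) * beta u + (1 - u) * (1 - (1 - u))].
Proof.
move=> /andP[u0 u1].
have v0 : 0 <= u * (4 - 3 * u) by apply: mulr_ge0 => //; lra.
set r := Num.sqrt (u * (4 - 3 * u)).
have r0 : 0 <= r by apply: sqrtr_ge0.
have rr : r * r = u * (4 - 3 * u) by rewrite -expr2 sqr_sqrtr.
rewrite /beta -/r; split.
- have : u <= r by nra.
  lra.
- have : r <= 2 - u by nra.
  lra.
- apply/eqP; rewrite -subr_eq0.
  have -> : ((u + r) / 2) ^+ 2 - ((1 - (1 - u)) * ((u + r) / 2) + (1 - u) * (1 - (1 - u)))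
       = (r * r - u * (4 - 3 * u)) / 4 by field.
  by rewrite rr subrr mul0r.
Qed.

Lemma beta_diff (u0 um sq : R) : 0 < sq -> sq / 2 <= u0 -> u0 <= um -> um <= 1 ->
  um - u0 <= 3 * sq ^+ 2 -> beta um <= beta u0 * (1 + 30 * sq).
Proof.
move=> sq0 hu0 h0m hm1 hd.
have u0p : 0 < u0 by lra.
have u01 : u0 <= 1 by lra.
have v0p : 0 <= u0 * (4 - 3 * u0) by apply: mulr_ge0; lra.
have vmp : 0 <= um * (4 - 3 * um) by apply: mulr_ge0; lra.
set r0 := Num.sqrt (u0 * (4 - 3 * u0)).
set rm := Num.sqrt (um * (4 - 3 * um)).
have r0n : 0 <= r0 by apply: sqrtr_ge0.
have rmn : 0 <= rm by apply: sqrtr_ge0.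
have r0r : r0 * r0 = u0 * (4 - 3 * u0) by rewrite -expr2 sqr_sqrtr.
have rmr : rm * rm = um * (4 - 3 * um) by rewrite -expr2 sqr_sqrtr.
have v0ge : u0 <= u0 * (4 - 3 * u0) by nra.
have r0p : 0 < r0.
  rewrite lt_neqAle r0n andbT; apply/eqP => e.
  by move: r0r; rewrite -e mulr0 => e'; lra.
have key : (rm - r0) * r0 <= 4 * (um - u0).
  case: (leP rm r0) => hr.
    have : (rm - r0) * r0 <= 0 by apply: mulr_le0_ge0; lra.
    lra.
  have : (rm - r0) * r0 <= (rm - r0) * (rm + r0) by apply: ler_wpM2l; lra.
  have -> : (rm - r0) * (rm + r0) = rm * rm - r0 * r0 by ring.
  rewrite rmr r0r.
  have : 0 <= (um - u0) * (um + u0) by apply: mulr_ge0; lra.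
  nra.
have k2 : (rm - r0) * r0 <= (24 * sq * r0) * r0.
  have -> : (24 * sq * r0) * r0 = 24 * sq * (r0 * r0) by ring.
  rewrite r0r.
  have : 12 * sq ^+ 2 <= 24 * sq * u0.
    have -> : sq ^+ 2 = sq * sq by rewrite expr2.
    nra.
  have : 24 * sq * u0 <= 24 * sq * (u0 * (4 - 3 * u0)).
    by apply: ler_wpM2l => //; lra.
  lra.
have k3 : rm - r0 <= 24 * sq * r0 by rewrite -(ler_pM2r r0p).
have k4 : um - u0 <= 6 * sq * u0.
  have : 3 * sq ^+ 2 <= 6 * sq * u0.
    have -> : sq ^+ 2 = sq * sq by rewrite expr2.
    nra.
  lra.
rewrite /beta -/r0 -/rm.
have : 0 <= sq * u0 by apply: mulr_ge0; lra.
have : 0 <= sq * r0 by apply: mulr_ge0; lra.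
nra.
Qed.

Lemma q_facts (p : R) : 0 < p < 1 / 10 ->
  [/\ 0 < qp p, qp p <= 1 / 9 & expR (- qp p) = 1 - p].
Proof.
move=> /andP[p0 p1].
have e : expR (- qp p) = 1 - p by rewrite /qp opprK lnK // posrE; lra.
have q0 : 0 < qp p by rewrite /qp oppr_gt0 ln_lt0 //; apply/andP; split; lra.
split => //.
have E : expR (qp p) * (1 - p) = 1 by rewrite -e -expRD subrr expR0.
have Ep := expR_gt0 (qp p).
have : expR (qp p) <= 10 / 9 by nra.
have := expR_ge1Dx (1 / 9 : R).
move=> h1 h2.
have : expR (qp p) <= expR (1 / 9) by lra.
by rewrite ler_expR.
Qed.

Lemma arith_fin (lm l0 sq Lq L K M A : R) :
  lm <= l0 + 30 * sq -> l0 <= 0 -> - (2 * Lq) <= l0 -> Lq <= L -> K * sq <= L ->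
  0 <= K - 1 -> 3 <= A -> M <= A + 3 -> 0 <= sq ->
  lm * (K - 1) <= - (M - A) * - l0 - (K - A) * - l0 + 40 * L.
Proof.
move=> lb l0le l0ge f3 f4 K1 A3 hmA sq0.
have f1 : (K - 1) * lm <= (K - 1) * (l0 + 30 * sq) by apply: ler_wpM2l.
have f2 : 0 <= (2 + 2 * A - M) * (- l0) by apply: mulr_ge0; lra.
lra.
Qed.

Lemma final_ineq (p : R) (m k : nat) : 0 < p < 1 / 10 ->
  ((Aint p)%:~R <= (m%:R : R)) -> ((m%:R : R) <= (Aint p)%:~R + 3) ->
  (1 <= k)%N -> ((k%:R : R) <= (Bint p)%:~R) ->
  beta (1 - (1 - p) ^+ m) ^+ k.-1 <=
  expR (- (m%:R - (Aint p)%:~R) * gfun ((Aint p)%:~R * qp p)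
        - (k%:R - (Aint p)%:~R) * gfun ((Aint p)%:~R * qp p)
        + 40 * (Num.sqrt (qp p))^-1 * ln ((qp p)^-1)).
Proof.
move=> hp hAm hmA hk hkB; set q := qp p; set A : R := (Aint p)%:~R.
have [q0 q9 eq] := @q_facts p hp.
rewrite -/q in q0 q9 eq.
set sq := Num.sqrt q.
have sq0 : 0 < sq by rewrite sqrtr_gt0.
have sqq : sq * sq = q by rewrite -expr2 sqr_sqrtr // ltW.
have sq3 : sq <= 1 / 3 by nra.
have hA1 : 1 / sq <= A by rewrite /A /Aint; apply: ceil_ge.
have hA2 : A - 1 < 1 / sq.
  have := ceil_itv (1 / sq); rewrite /A /Aint -/q -/sq intrB => /andP[] //.
have Asq1 : 1 <= A * sq.
  by move: hA1; rewrite ler_pdivrMr.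
have Asq2 : A * sq < 1 + sq.
  move: hA2; rewrite ltr_pdivlMr // => h; lra.
set z := A * q.
have z1 : sq <= z by rewrite /z -sqq; nra.
have z2 : z <= 1 / 2 by rewrite /z -sqq; nra.
set e0 := expR (- z).
have e0p : 0 < e0 := expR_gt0 _.
have e0z : e0 * (1 + z) <= 1.
  have := expR_ge1Dx z; rewrite /e0 => h.
  have : e0 * (1 + z) <= e0 * expR z by apply: ler_wpM2l; lra.
  by rewrite /e0 -expRD addNr expR0.
set u0 := 1 - e0.
have u0ge : sq / 2 <= u0 by rewrite /u0; nra.
have em : (1 - p) ^+ m = expR (- (m%:R * q)).
  by rewrite -eq -expRM_natl mulrN.
set d := (m%:R - A) * q.
have d0 : 0 <= d by rewrite /d; apply: mulr_ge0; lra.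
have d3 : d <= 3 * sq ^+ 2 by rewrite /d expr2 sqq; nra.
have emd : expR (- (m%:R * q)) = e0 * expR (- d).
  by rewrite /e0 -expRD /d /z; congr expR; ring.
have ed1 := expR_ge1Dx (- d).
have ed2 : expR (- d) <= 1 by rewrite expR_le1; lra.
set um := 1 - (1 - p) ^+ m.
have umE : um = 1 - e0 * expR (- d) by rewrite /um em emd.
have hum1 : u0 <= um by rewrite umE /u0; nra.
have hum2 : um <= 1 by rewrite umE; have := expR_gt0 (- d); nra.
have humd : um - u0 <= 3 * sq ^+ 2 by rewrite umE /u0; nra.
have hbd := @beta_diff _ _ _ sq0 u0ge hum1 hum2 humd.
have hu0 : 0 <= u0 <= 1 by apply/andP; split; lra.
have hum : 0 <= um <= 1 by apply/andP; split; lra.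
have [b0ge b01 _] := @beta_props u0 hu0.
have [bmge bm1 _] := @beta_props um hum.
set b0 := beta u0 in b0ge b01 hbd *.
set bm := beta um in bmge bm1 hbd *.
have b0p : 0 < b0 by lra.
have bmp : 0 < bm by lra.
have hg : gfun z = - ln b0 by [].
rewrite hg.
have lb : ln bm <= ln b0 + 30 * sq.
  have h1 : ln bm <= ln (b0 * (1 + 30 * sq)).
    by rewrite ler_ln // posrE; apply: mulr_gt0; lra.
  rewrite lnM ?posrE // in h1; last by lra.
  have := @le_ln1Dx R (30 * sq) (_ : -1 < 30 * sq).
  move=> h2; have := h2 ltac:(lra); lra.
have l0le : ln b0 <= 0 := ln_le0 b01.
set Lq := ln q^-1.
have q1 : 1 <= q^-1 by rewrite invf_ge1 //; lra.
have Lq0 : 0 <= Lq := ln_ge0 q1.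
have lnq : ln q = - Lq by rewrite /Lq lnV ?posrE // opprK.
have l0ge : - (2 * Lq) <= ln b0.
  have hq2 : q ^+ 2 <= b0.
    have : q ^+ 2 <= sq / 2.
      rewrite -sqq expr2.
      have : sq * sq <= 1 / 9 by nra.
      have : 0 <= sq * sq by nra.
      nra.
    lra.
  have := hq2; rewrite -ler_ln ?posrE ?exprn_gt0 // lnXn // lnq; lra.
have hB : (Bint p)%:~R <= q^-1 * Lq by rewrite /Bint; apply: floor_le.
set K : R := k%:R in hkB *.
set M : R := m%:R in hAm hmA *.
have f4 : K * sq <= sq^-1 * Lq.
  have : K * sq <= q^-1 * Lq * sq by apply: ler_wpM2r; lra.
  have -> : q^-1 * Lq * sq = sq^-1 * Lq.
    by rewrite -sqq; field; apply/eqP; lra.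
  done.
have f3 : Lq <= sq^-1 * Lq.
  rewrite ler_peMl //; rewrite invf_ge1 //; lra.
have hk1 : ((k.-1)%:R : R) = K - 1.
  by rewrite /K; case: (k) hk => // k' _ /=; rewrite -addn1 natrD addrK.
have K1 : 0 <= K - 1 by rewrite -hk1.
have A3 : 3 <= A.
  have : 3 <= 1 / sq by rewrite ler_pdivlMr //; lra.
  lra.
rewrite -[bm ^+ _]lnK ?posrE ?exprn_gt0 // lnXn // -[ln bm *+ _]mulr_natr hk1 ler_expR.
rewrite -[40 / sq * Lq]mulrA.
exact: (arith_fin _ _ _ _ _ _ _ _ lb l0le l0ge f3 f4 K1 A3 hmA (ltW sq0)).
Qed.



Lemma probG_bound (p : R) w h : 0 < p < 1 -> (0 < w)%N -> (0 < h)%N ->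
  probG p w h <= beta (1 - (1 - p) ^+ w) ^+ h.-1.
Proof.
move=> /andP[p0 p1] w0 h0.
set x := (1 - p) ^+ w.
have x0 : 0 <= x by rewrite /x exprn_ge0 // subr_ge0 ltW.
have x1 : x < 1.
  have a : 0 <= 1 - p by lra.
  have b : 1 - p < 1 by lra.
  by rewrite /x (exprn_ilt1 w a b) -lt0n.
have hu : 0 <= 1 - x <= 1 by apply/andP; split; lra.
have [bge b1 be] := @beta_props (1 - x) hu.
rewrite (_ : 1 - (1 - x) = x) in be; last by ring.
set bt := beta (1 - x) in bge b1 be *.
have btp : 0 < bt by lra.
have hx : 0 <= x <= 1 by apply/andP; split; lra.
have hb : 0 <= bt <= 1 by apply/andP; split; lra.
have H1 : 0 <= p <= 1 -> probG p w h <= Dx x h := probG_le_Dx p w h.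
have H2 := Dx_bound x bt h hx hb be.
rewrite -(ler_pM2l btp) -exprS prednK //.
apply: le_trans H2; rewrite ler_pM2l //; apply: H1; apply/andP; split; lra.
Qed.

End Comb.

Lemma subrect_mono (r1 r2 : rect) : in_rect r1 0 0 -> subrect r1 r2 ->
  in_rect r2 0 0 /\ (dima r1 <= dima r2) /\ (dimb r1 <= dimb r2).
Proof.
move=> H hs; have [/andP[x0 x1] /andP[y0 y1]] := H.
have hA : in_rect r1 (rx0 r1) (ry0 r1).
  by split; apply/andP; split; lia.
have hB : in_rect r1 (rx1 r1) (ry1 r1).
  by split; apply/andP; split; lia.
have [/andP[a1 a2] /andP[a3 a4]] := hs _ _ hA.
have [/andP[b1 b2] /andP[b3 b4]] := hs _ _ hB.
rewrite /dima /dimb; split; [exact: hs | split; lia].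
Qed.

Lemma chain_dims (R : realType) (p : R) n Rs : good p n Rs ->
  (dima (Rs 1%N) + dimb (Rs 1%N) <= Bint p) /\ in_rect (Rs 1%N) 0 0.
Proof.
move=> [hn [h0 [hsub [_ [hB _]]]]].
have H : forall i, (1 <= i <= n)%N -> in_rect (Rs i) 0 0 /\
    dima (Rs 1%N) + dimb (Rs 1%N) <= dima (Rs i) + dimb (Rs i).
  elim => [//|i IH] /andP[_ hi].
  case: (posnP i) => [->|ip]; first by split.
  have hi' : (1 <= i <= n)%N by rewrite ip ltnW.
  have [IH1 IH2] := IH hi'.
  have [r1 [r2 r3]] := @subrect_mono _ _ IH1 (hsub i hi').
  split => //; lia.
have hn' : (1 <= n <= n)%N by rewrite hn leqnn.
have [_ H2] := H n hn'.
split => //; exact: le_trans H2 hB.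
Qed.

Theorem lemma13 (R : realType) :
  exists C5 : R, forall p : R, 0 < p < 1 / 10 ->
  forall (n : nat) (Rs : nat -> rect), good p n Rs ->
  let q := qp p in
  let a0 : R := (Aint p)%:~R in
  let b0 : R := (Aint p)%:~R in
  let s0 : R := (dima (Rs 1%N))%:~R - a0 in
  let t0 : R := (dimb (Rs 1%N))%:~R - b0 in
  probG_rect p (Rs 1%N) <=
    expR (- s0 * gfun (b0 * q) - t0 * gfun (a0 * q)
          + C5 * (Num.sqrt q)^-1 * ln (q^-1)).
Proof.
exists 40 => p hp n Rs hg; cbv zeta.
have [hab h0] := @chain_dims R p n Rs hg.
have [_ [_ [_ [hmin _]]]] := hg.
have hp1 : 0 < p < 1 by move/andP: hp => [p0 p1]; apply/andP; split; lra.
have [/andP[x0 x1] /andP[y0 y1]] := h0.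
have ha : 0 < dima (Rs 1%N) by rewrite /dima; lia.
have hb : 0 < dimb (Rs 1%N) by rewrite /dimb; lia.
have ea : ((`|dima (Rs 1%N)|%N)%:R : R) = (dima (Rs 1%N))%:~R.
  by rewrite natr_absz ger0_norm // ltW.
have eb : ((`|dimb (Rs 1%N)|%N)%:R : R) = (dimb (Rs 1%N))%:~R.
  by rewrite natr_absz ger0_norm // ltW.
have ha' : (0 < `|dima (Rs 1%N)|)%N by rewrite absz_gt0 gt_eqF.
have hb' : (0 < `|dimb (Rs 1%N)|)%N by rewrite absz_gt0 gt_eqF.
rewrite /probG_rect.
case: (leP (dima (Rs 1%N)) (dimb (Rs 1%N))) => hle.
- rewrite (min_l hle) in hmin; move/andP: hmin => [m1 m2].
  apply: le_trans (@probG_bound R p _ _ hp1 ha' hb') _.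
  have := @final_ineq R p `|dima (Rs 1%N)| `|dimb (Rs 1%N)| hp.
  have h3 : ((dima (Rs 1%N))%:~R : R) <= (Aint p)%:~R + 3.
    by move: m2; rewrite -(ler_int R) intrD.
  rewrite ea eb !ler_int; apply => //; lia.
- rewrite (min_r (ltW hle)) in hmin; move/andP: hmin => [m1 m2].
  rewrite probG_sym.
  apply: le_trans (@probG_bound R p _ _ hp1 hb' ha') _.
  have := @final_ineq R p `|dimb (Rs 1%N)| `|dima (Rs 1%N)| hp.
  have h3 : ((dimb (Rs 1%N))%:~R : R) <= (Aint p)%:~R + 3.
    by move: m2; rewrite -(ler_int R) intrD.
  rewrite ea eb !ler_int => H.
  have E : forall x y g z : R, - x * g - y * g + z = - y * g - x * g + z.
    by move=> *; ring.
  rewrite E; apply: H => //; lia.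
Qed.
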